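(* Assume the setting in the context (deterministic $\Phi$ with $\operatorname{rank}(\widehat\Phi_1)=k$). Let $\theta_1\le\dots\le\theta_k$ be the principal angles between $\mathcal R(Q)$ and $\mathcal R(U_k)$, and $\varphi_1\le\dots\le\varphi_k$ the principal angles between $\mathcal R(P)$ and $\mathcal R(V_k)$. Then for $i=1,\dots,k$, $$\cos\theta_i\ge\frac{1}{\sqrt{1+\delta_i^{4q+4}\|\widehat\Phi_2\widehat\Phi_1^\dagger\|_2^2}},\qquad \tan\theta_i\le\delta_i^{2q+2}\|\widehat\Phi_2\widehat\Phi_1^\dagger\|_2,$$ $$\cos\varphi_i\ge\frac{1}{\sqrt{1+\delta_i^{4q+2}\|\widehat\Phi_2\widehat\Phi_1^\dagger\|_2^2}},\qquad \tan\varphi_i\le\delta_i^{2q+1}\|\widehat\Phi_2\widehat\Phi_1^\dagger\|_2.$$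
   Context: Let $A\in\mathbb R^{m\times n}$ with $m\ge n$ have full SVD $A=U\Sigma V^T$, with singular values $\sigma_1\ge\sigma_2\ge\dots\ge\sigma_n\ge 0$. Fix an integer $k\ge1$ with $\sigma_k>0$ (the paper regards $A$ as having numerical rank $k$, i.e. $\sigma_k$ well separated from $\sigma_{k+1}$). Write $U=[U_k\ U_\perp]$ with $U_k\in\mathbb R^{m\times k}$ the first $k$ left singular vectors $u_1,\dots,u_k$, $U_\perp\in\mathbb R^{m\times(m-k)}$ the rest; $V=[V_k\ V_\perp]$ with $V_k\in\mathbb R^{n\times k}$ the first $k$ right singular vectors $v_1,\dots,v_k$; $\Sigma_k=\mathrm{diag}(\sigma_1,\dots,\sigma_k)$ and $\Sigma_\perp$ the remaining diagonal block of $\Sigma$ containing $\sigma_{k+1},\dots,\sigma_n$ (so $\|\Sigma_\perp\|_2=\sigma_{k+1}$, $\|\Sigma_\perp\|_F=(\sum_{i>k}\sigma_i^2)^{1/2}$). The notation $\|\cdot\|_{2,F}$ means the statement holds for both the spectral and Frobenius norm. Let $p\ge1$ be an oversampling integer, $d=k+p<n$, and $q\ge0$ an integer (power-iteration parameter). RU-QLP (Randomized Unpivoted QLP): given $\Phi\in\mathbb R^{m\times d}$, let $\bar P\in\mathbb R^{n\times d}$ have orthonormal columns spanning the range of $(A^TA)^qA^T\Phi$ (assumed of rank $d$); compute the thin unpivoted QR factorization $A\bar P=QR$ with $Q\in\mathbb R^{m\times d}$ having orthonormal columns and $R\in\mathbb R^{d\times d}$ upper triangular; compute the thin unpivoted QR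 factorization $R^T=\widetilde P\widetilde R$; set $P=\bar P\widetilde P\in\mathbb R^{n\times d}$ and $L=\widetilde R^T$ (lower triangular), giving $\hat A=QLP^T$. Partition $R=\begin{bmatrix}R_{11}&R_{12}\\0&R_{22}\end{bmatrix}$ and $L=\begin{bmatrix}L_{11}&0\\L_{21}&L_{22}\end{bmatrix}$ with $R_{11},L_{11}\in\mathbb R^{k\times k}$. Define $\widehat\Phi_1=U_k^T\Phi\in\mathbb R^{k\times d}$ and $\widehat\Phi_2=U_\perp^T\Phi\in\mathbb R^{(m-k)\times d}$, assume $\widehat\Phi_1$ has rank $k$, and let $\dagger$ denote the Moore–Penrose inverse. Set $\delta_i=\sigma_{k+1}/\sigma_i$ for $i=1,\dots,k$ and $\gamma=\sigma_n/\sigma_1$. Principal angles between a subspace $\mathcal X$ and a $k$-dimensional subspace $\mathcal Y$ (with $\dim\mathcal X\ge k$) are the $k$ canonical angles $0\le\alpha_1\le\dots\le\alpha_k\le\pi/2$; for orthonormal bases $X$, $Y$, the values $\sin\alpha_i$ are the singular values of $(I-XX^T)Y$. *)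

(* Defs.v *)
From HB Require Import structures.
From mathcomp Require Import all_boot all_order all_algebra.
From mathcomp Require Import all_classical all_reals.
From mathcomp Require Import trigo.
Set Implicit Arguments.
Unset Strict Implicit.
Unset Printing Implicit Defensive.
Import Order.TTheory GRing.Theory Num.Theory.
Local Open Scope ring_scope.

Section Defs.
Variable R : realType.

Definition vnorm2 (p : nat) (x : 'cV[R]_p) : R :=
  Num.sqrt (\sum_(i < p) x i 0 ^+ 2).

Definition spec_norm (p r : nat) (M : 'M[R]_(p, r)) : R :=
  sup [set vnorm2 (M *m x) | x in [set x : 'cV[R]_r | vnorm2 x <= 1]].

Definition orthonormal_cols (p r : nat) (X : 'M[R]_(p, r)) : Prop :=
  X^T *m X = 1%:M.

(* Upper triangular (MathComp's is_trig_mx is lower triangular). *)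
Definition upper_trig (p : nat) (T : 'M[R]_p) : bool := is_trig_mx T^T.

Definition first_cols (p k : nat) (W : 'M[R]_p) : 'M[R]_(p, k) :=
  W *m pid_mx k.

(* The last p - k columns (columns k, ..., p-1) of a p x p matrix. *)
Definition last_cols (p k : nat) (W : 'M[R]_p) : 'M[R]_(p, p - k) :=
  W *m \matrix_(i < p, j < p - k) ((i : nat) == k + j)%N%:R.

Definition is_svals (p r : nat) (W : 'M[R]_(p, r)) (s : 'I_r -> R) : Prop :=
  (forall i j : 'I_r, (i <= j)%N -> s j <= s i) /\
  (forall i, 0 <= s i) /\
  exists (P : 'M[R]_(p, r)) (Q : 'M[R]_r),
    orthonormal_cols P /\ orthonormal_cols Q /\
    W = P *m diag_mx (\row_i s i) *m Q^T.

(* th_1 <= ... <= th_k are the principal angles between R(X) and R(Y),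
   X, Y orthonormal bases: th_i in [0, pi/2] and the sin th_i are the
   singular values of (I - X X^T) Y. *)
Definition principal_angles (p d k : nat) (X : 'M[R]_(p, d)) (Y : 'M[R]_(p, k))
    (th : 'I_k -> R) : Prop :=
  (forall i j : 'I_k, (i <= j)%N -> th i <= th j) /\
  (forall i, 0 <= th i <= pi / 2) /\
  is_svals ((1%:M - X *m X^T) *m Y) (fun i => sin (th (rev_ord i))).

Definition is_mp_pinv (p r : nat) (M : 'M[R]_(p, r)) (X : 'M[R]_(r, p)) : Prop :=
  [/\ M *m X *m M = M, X *m M *m X = X,
      (M *m X)^T = M *m X & (X *m M)^T = X *m M].

End Defs.

(* Main.v *)
Require Import Defs.
From HB Require Import structures.
From mathcomp Require Import all_boot all_order all_algebra.
From mathcomp Require Import all_classical all_reals.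
From mathcomp Require Import trigo.
From mathcomp Require Import ring lra zify.
Import Order.TTheory GRing.Theory Num.Theory.
Set Implicit Arguments.
Unset Strict Implicit.
Unset Printing Implicit Defensive.
Local Open Scope ring_scope.

Section Aux.
Variable R : realType.

Definition nsq (p : nat) (v : 'cV[R]_p) : R := \sum_(i < p) v i 0 ^+ 2.

Lemma nsq_tr p (v : 'cV[R]_p) : nsq v = (v^T *m v) 0 0.
Proof. rewrite /nsq mxE; apply: eq_bigr => i _; rewrite !mxE expr2. by []. Qed.

Lemma nsq_ge0 p (v : 'cV[R]_p) : 0 <= nsq v.
Proof. by apply: sumr_ge0 => i _; apply: sqr_ge0. Qed.

Lemma nsq_eq0 p (v : 'cV[R]_p) : nsq v = 0 -> v = 0.
Proof.
move=> h; apply/matrixP => a b; rewrite ord1 mxE.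
have := @psumr_eq0P R _ predT (fun i : 'I_p => v i 0 ^+ 2) (fun i _ => sqr_ge0 _) h a isT.
by move/eqP; rewrite sqrf_eq0 => /eqP.
Qed.

Lemma nsq_orth a p (O : 'M[R]_(a, p)) (v : 'cV[R]_p) :
  O^T *m O = 1%:M -> nsq (O *m v) = nsq v.
Proof.
move=> hO; rewrite !nsq_tr trmx_mul -mulmxA (mulmxA O^T) hO mul1mx //.
Qed.

Lemma nsqZ p (a : R) (v : 'cV[R]_p) : nsq (a *: v) = a ^+ 2 * nsq v.
Proof. rewrite /nsq mulr_sumr; apply: eq_bigr => i _; rewrite mxE exprMn //. Qed.

Lemma nsqD_orth p (u g : 'cV[R]_p) (a b : R) : u^T *m g = 0 ->
  nsq (a *: u + b *: g) = a ^+ 2 * nsq u + b ^+ 2 * nsq g.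
Proof.
move=> h.
have h0 : \sum_(i < p) u i 0 * g i 0 = 0.
  rewrite [RHS](_ : 0 = (u^T *m g) 0 0); last by rewrite h mxE.
  by rewrite mxE; apply: eq_bigr => i _; rewrite mxE.
rewrite /nsq !mulr_sumr.
rewrite -big_split /=.
transitivity (\sum_(i < p) (a^+2 * u i 0 ^+2 + b^+2 * g i 0^+2) + 2*a*b * \sum_(i<p) u i 0 * g i 0).
  rewrite mulr_sumr -big_split /=; apply: eq_bigr => i _; rewrite !mxE; ring.
by move: h0 => /= ->; rewrite mulr0 addr0.
Qed.

Lemma proj_sym m d (X : 'M[R]_(m, d)) : (1%:M - X *m X^T)^T = 1%:M - X *m X^T.
Proof. by rewrite linearB /= trmx1 trmx_mul trmxK. Qed.

Lemma proj_idem m d (X : 'M[R]_(m, d)) : X^T *m X = 1%:M ->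
  (1%:M - X *m X^T) *m (1%:M - X *m X^T) = 1%:M - X *m X^T.
Proof.
move=> hX; rewrite mulmxBl mul1mx mulmxBr mulmx1 -!mulmxA (mulmxA X^T) hX mul1mx.
by rewrite subrr subr0.
Qed.

Lemma proj_le m d (X : 'M[R]_(m, d)) (y : 'cV[R]_m) : X^T *m X = 1%:M ->
  nsq ((1%:M - X *m X^T) *m y) <= nsq y.
Proof.
move=> hX; rewrite !nsq_tr trmx_mul proj_sym -mulmxA (mulmxA (1%:M - _)) proj_idem //.
have sub00 (M N : 'M[R]_1) : (M - N) 0 0 = M 0 0 - N 0 0 by rewrite !mxE.
rewrite mulmxBl mul1mx mulmxBr sub00.
have -> : (y^T *m (X *m X^T *m y)) 0 0 = nsq (X^T *m y).
  by rewrite nsq_tr trmx_mul trmxK !mulmxA.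
by rewrite lerBlDr lerDl nsq_ge0.
Qed.

Lemma proj_kill m d r (X : 'M[R]_(m, d)) (y : 'M[R]_(d, r)) : X^T *m X = 1%:M ->
  (1%:M - X *m X^T) *m (X *m y) = 0.
Proof.
move=> hX; rewrite mulmxBl mul1mx -!mulmxA (mulmxA X^T) hX mul1mx subrr //.
Qed.

Lemma nsq0 p : nsq (0 : 'cV[R]_p) = 0.
Proof. by rewrite /nsq big1 // => i _; rewrite mxE expr0n. Qed.

Lemma vnorm2E p (v : 'cV[R]_p) : vnorm2 v = Num.sqrt (nsq v).
Proof. by []. Qed.

Lemma sqrt_le_sq (u c : R) : 0 <= u -> 0 <= c -> Num.sqrt u <= c -> u <= c ^+ 2.
Proof.
move=> hu hc h; rewrite -(sqr_sqrtr hu).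
have h0 := sqrtr_ge0 u. nra.
Qed.

Lemma entry_le_nsq p (v : 'cV[R]_p) (b : 'I_p) : v b 0 ^+ 2 <= nsq v.
Proof.
rewrite /nsq (bigD1 b) //= lerDl; apply: sumr_ge0 => i _; apply: sqr_ge0.
Qed.

Lemma spec_bound p r (H : 'M[R]_(p, r)) :
  0 <= spec_norm H /\ forall z, nsq (H *m z) <= spec_norm H ^+ 2 * nsq z.
Proof.
set S := [set vnorm2 (H *m x) | x in [set x : 'cV[R]_r | vnorm2 x <= 1]]%classic.
have v0 : vnorm2 (0 : 'cV[R]_r) = 0.
  rewrite vnorm2E /nsq big1 ?sqrtr0 // => i _; rewrite mxE expr0n.  by [].
have hs : has_sup S.
  split; first by exists (vnorm2 (H *m 0)); exists 0 => //=; rewrite v0.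
  exists (Num.sqrt (\sum_(a < p) (\sum_(b < r) `|H a b|) ^+ 2)).
  move=> y [x /= hx <-]; rewrite vnorm2E ler_sqrt; last first.
    by apply: sumr_ge0 => i _; apply: sqr_ge0.
  have hx1 : nsq x <= 1.
    by have := sqrt_le_sq (nsq_ge0 x) ler01 hx; rewrite expr1n.
  apply: ler_sum => a _; rewrite mxE.
  have hn : `|\sum_(b < r) H a b * x b 0| <= \sum_(b < r) `|H a b|.
    apply: le_trans (ler_norm_sum _ _ _) _; apply: ler_sum => b _.
    rewrite normrM; have := entry_le_nsq x b => hb.
    have hxb : `|x b 0| <= 1.
      rewrite ler_norml; apply/andP; split; nra.
    have := normr_ge0 (H a b); nra.
  move: hn; rewrite ler_norml => /andP [h1 h2]; nra.
have c0 : 0 <= spec_norm H.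
  apply: le_trans (sup_upper_bound hs _); last by exists 0 => //=; rewrite v0.
  by rewrite vnorm2E sqrtr_ge0.
split => // z.
have [hz|hz] := eqVneq (nsq z) 0.
  by rewrite hz (nsq_eq0 hz) mulmx0 nsq0 mulr0.
have zp : 0 < nsq z by rewrite lt_def hz nsq_ge0.
set rr := Num.sqrt (nsq z).
have rp : 0 < rr by rewrite sqrtr_gt0.
have hz' : nsq (rr^-1 *: z) = 1.
  by rewrite nsqZ exprVn sqr_sqrtr ?nsq_ge0 // mulVf.
have hS : S (vnorm2 (H *m (rr^-1 *: z))).
  by exists (rr^-1 *: z) => //=; rewrite vnorm2E hz' sqrtr1.
have := sup_upper_bound hs hS.
rewrite vnorm2E -scalemxAr nsqZ => hle.
have := sqrt_le_sq (mulr_ge0 (sqr_ge0 _) (nsq_ge0 _)) c0 hle.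
rewrite exprVn sqr_sqrtr ?nsq_ge0 //.
have := nsq_ge0 (H *m z) => hg.
move=> h; rewrite -ler_pdivrMr // mulrC //.
Qed.

Lemma trig_final (th t : R) : 0 <= th <= pi / 2 -> 0 <= t ->
  sin th ^+ 2 * (1 + t ^+ 2) <= t ^+ 2 ->
  1 / Num.sqrt (1 + t ^+ 2) <= cos th /\ tan th <= t.
Proof.
move=> /andP [h0 h1] ht hs.
have c0 : 0 <= cos th.
  apply: cos_ge0_pihalf; rewrite h1 andbT.
  have := pi_ge0 R; lra.
have hc := cos2Dsin2 th.
have hcc : 1 <= cos th ^+ 2 * (1 + t ^+ 2).
  rewrite (_ : cos th ^+ 2 = 1 - sin th ^+ 2); last by rewrite -hc addrK.
  rewrite mulrBl mul1r; lra.
have cp : 0 < cos th.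
  rewrite lt_def c0 andbT; apply/eqP => hc0; move: hcc; rewrite hc0; nra.
have T0 : 0 <= 1 + t ^+ 2 by nra.
have qp : 0 < Num.sqrt (1 + t ^+ 2) by rewrite sqrtr_gt0; nra.
have q2 := sqr_sqrtr T0.
split.
  rewrite ler_pdivrMr //.
  have hq : 1 <= (cos th * Num.sqrt (1 + t ^+ 2)) ^+ 2 by rewrite exprMn q2.
  have : 0 <= cos th * Num.sqrt (1 + t ^+ 2) by nra.
  move: hq; set y := cos th * _; nra.
rewrite /tan ler_pdivrMr //.
have hs2 : sin th ^+ 2 <= (t * cos th) ^+ 2 by nra.
have : 0 <= t * cos th by nra.
nra.
Qed.

Lemma mul_pid_entry p k r (A : 'M[R]_(p, k)) a (l : 'I_k) :
  (A *m pid_mx r) a l = if (l < r)%N then A a l else 0.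
Proof.
rewrite mxE (bigD1 l) //= big1 => [|j /negbTE hj]; last first.
  by rewrite /pid_mx mxE val_eqE hj /= mulr0.
rewrite /pid_mx mxE eqxx /=; case: (l < r)%N; by rewrite ?mulr1 ?mulr0 addr0.
Qed.

Lemma gen_bound (m d k : nat) (O : 'M[R]_m) (X : 'M[R]_(m, d)) (s : 'I_k -> R)
    (i : 'I_k) (t : R) :
  (k <= m)%N -> O^T *m O = 1%:M -> X^T *m X = 1%:M ->
  is_svals ((1%:M - X *m X^T) *m (O *m pid_mx k)) s -> 0 <= t ->
  (forall x : 'cV[R]_k, (forall l : 'I_k, (i < l)%N -> x l 0 = 0) ->
    exists g w : 'cV[R]_m,
      [/\ (1%:M - X *m X^T) *m w = 0, O^T *m w = pid_mx k *m x + g,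
          (pid_mx k : 'M[R]_(m, k))^T *m g = 0 & nsq g <= t ^+ 2 * nsq x]) ->
  s (rev_ord i) ^+ 2 * (1 + t ^+ 2) <= t ^+ 2.
Proof.
move=> km hO hX [smono [s0 [P [Qs [hP [hQs hW]]]]]] t0 hyp.
set Wm := 1%:M - X *m X^T.
have hOO : O *m O^T = 1%:M by apply: mulmx1C.
have hpp : (pid_mx k : 'M[R]_(m, k))^T *m pid_mx k = 1%:M.
  by rewrite tr_pid_mx mul_pid_mx minnn (minn_idPr km) pid_mx_1.
have upper : forall x : 'cV[R]_k, (forall l : 'I_k, (i < l)%N -> x l 0 = 0) ->
    nsq (Wm *m (O *m pid_mx k) *m x) * (1 + t ^+ 2) <= t ^+ 2 * nsq x.
  move=> x hx; have [g [w [hw hOw hg hgn]]] := hyp x hx.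
  set T := t ^+ 2.
  have T0 : 0 < 1 + T by rewrite /T; nra.
  set lam := (1 + T)^-1.
  have hl : lam * (1 + T) = 1 by rewrite mulVf // gt_eqF.
  set u := (pid_mx k : 'M[R]_(m, k)) *m x.
  have ew : w = O *m (u + g) by rewrite -hOw mulmxA hOO mul1mx.
  have e1 : Wm *m (O *m pid_mx k) *m x = Wm *m (O *m ((1 - lam) *: u + (- lam) *: g)).
    rewrite -!mulmxA -/u scalerBl scale1r scaleNr -addrA -opprD -scalerDr.
    by rewrite !mulmxBr -!scalemxAr -ew hw scaler0 subr0.
  have hug : u^T *m g = 0 by rewrite trmx_mul -mulmxA hg mulmx0.
  rewrite e1.
  have h1 := proj_le (O *m ((1 - lam) *: u + - lam *: g)) hX.
  rewrite nsq_orth // nsqD_orth // /u nsq_orth // in h1.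
  have hN := nsq_ge0 x; have hG := nsq_ge0 g.
  have hL : 1 - lam = T * lam by rewrite -{1}hl; ring.
  rewrite hL in h1 *.
  have L0 : 0 <= lam by rewrite invr_ge0 ltW.
  apply: le_trans (ler_wpM2r (ltW T0) h1) _.
  have hT : 0 <= T by rewrite /T; nra.
  have : (T * lam) ^+ 2 * nsq x + (- lam) ^+ 2 * nsq g <= lam ^+ 2 * T * (1 + T) * nsq x.
    rewrite sqrrN (_ : lam ^+ 2 * T * (1 + T) * nsq x = (T * lam) ^+ 2 * nsq x + lam ^+ 2 * (T * nsq x)); last by ring.
    by rewrite lerD2l; apply: ler_wpM2l => //; apply: sqr_ge0.
  move=> h2; apply: le_trans (ler_wpM2r (ltW T0) h2) _.
  rewrite (_ : lam ^+ 2 * T * (1 + T) * nsq x * (1 + T) = T * nsq x * (lam * (1 + T)) ^+ 2); last by ring.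
  by rewrite hl expr1n mulr1.
set j := rev_ord i.
have lower : forall cc : 'cV[R]_k, (forall l : 'I_k, (k - i <= l)%N -> cc l 0 = 0) ->
    s j ^+ 2 * nsq cc <= nsq (Wm *m (O *m pid_mx k) *m (Qs *m cc)).
  move=> cc hcc; rewrite /Wm hW !mulmxA -(mulmxA _ Qs^T Qs) hQs mulmx1 -mulmxA nsq_orth //.
  rewrite /nsq mulr_sumr; apply: ler_sum => l _.
  rewrite mul_diag_mx mxE mxE exprMn.
  have [lt|ge] := ltnP l (k - i); last by rewrite (hcc l ge) expr0n /= !mulr0.
  apply: ler_wpM2r; first exact: sqr_ge0.
  have hjl : s j <= s l by apply: smono; rewrite /j /=; lia.
  have := s0 j; nra.
have QsU : Qs^T \in unitmx by case: (mulmx1_unit hQs).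
set S1 := (pid_mx (k - i) : 'M[R]_k) *m Qs^T.
set S2 := (pid_mx i.+1 : 'M[R]_k).
have ik : (i < k)%N := ltn_ord i.
have r1 : \rank S1 = (k - i)%N.
  by rewrite /S1 mxrankMfree ?row_free_unit // rank_pid_mx //; lia.
have r2 : \rank S2 = i.+1 by rewrite /S2 rank_pid_mx.
have rc := mxrank_sum_cap S1 S2.
have rs := rank_leq_col (S1 + S2)%MS.
have cap0 : (S1 :&: S2)%MS != 0.
  rewrite -mxrank_eq0; apply/eqP => h0; move: rc; rewrite h0 r1 r2; lia.
have [r hr rnz] := rowV0Pn cap0.
have /submxP [D1 e1] : (r <= S1)%MS := submx_trans hr (capmxSl _ _).
have /submxP [D2 e2] : (r <= S2)%MS := submx_trans hr (capmxSr _ _).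
set cc := (D1 *m (pid_mx (k - i) : 'M[R]_k))^T.
have ex : r^T = Qs *m cc by rewrite e1 /S1 mulmxA trmx_mul trmxK.
have hcc : forall l : 'I_k, (k - i <= l)%N -> cc l 0 = 0.
  move=> l hl; rewrite /cc mxE mul_pid_entry.
  by have -> : (l < k - i)%N = false by apply/negbTE; rewrite -leqNgt.
have hx : forall l : 'I_k, (i < l)%N -> r^T l 0 = 0.
  move=> l hl; rewrite mxE e2 /S2 mul_pid_entry.
  by have -> : (l < i.+1)%N = false by apply/negbTE; rewrite -leqNgt.
have Np : 0 < nsq r^T.
  rewrite lt_def nsq_ge0 andbT; apply/eqP => h0.
  by move: rnz; rewrite -(trmxK r) (nsq_eq0 h0) trmx0 eqxx.
have := upper _ hx; have := lower _ hcc; rewrite -ex => hl hu.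
have T0 : 0 <= 1 + t ^+ 2 by nra.
have h := le_trans (ler_wpM2r T0 hl) hu.
rewrite -(ler_pM2r Np).
rewrite (_ : s j ^+ 2 * (1 + t ^+ 2) * nsq r^T = s j ^+ 2 * nsq r^T * (1 + t ^+ 2)); last by ring.
by rewrite {1}ex nsq_orth.
Qed.

Definition vat m (v : 'cV[R]_m) (l : nat) : R :=
  \sum_(a < m) ((a : nat) == l)%:R * v a 0.

Lemma vat_ord m (v : 'cV[R]_m) (a : 'I_m) : vat v a = v a 0.
Proof.
rewrite /vat (bigD1 a) //= eqxx mul1r big1 ?addr0 // => b /negbTE hb.
by rewrite val_eqE hb mul0r.
Qed.

Lemma vat_ge m (v : 'cV[R]_m) l : (m <= l)%N -> vat v l = 0.
Proof.
move=> h; rewrite /vat big1 // => a _.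
have -> : ((a : nat) == l) = false by apply/negbTE; have := ltn_ord a; lia.
by rewrite mul0r.
Qed.

Lemma pidT_entry p k (v : 'cV[R]_p) (b : 'I_k) :
  ((pid_mx k : 'M[R]_(p, k))^T *m v) b 0 = vat v b.
Proof.
rewrite mxE; apply: eq_bigr => a _; rewrite mxE /pid_mx mxE.
case: eqP => [->|]; first by rewrite ltn_ord.
by [].
Qed.

Lemma pid_entry p k (x : 'cV[R]_k) (l : 'I_p) :
  ((pid_mx k : 'M[R]_(p, k)) *m x) l 0 = vat x l.
Proof.
rewrite mxE; apply: eq_bigr => a _; rewrite /pid_mx mxE eq_sym.
case: eqP => [<-|]; first by rewrite ltn_ord.
by [].
Qed.

Lemma sum_eqn (n l : nat) (f : nat -> R) :
  \sum_(j < n) ((l == j)%:R * f j) = (l < n)%:R * f l.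
Proof.
elim: n => [|n IH]; first by rewrite big_ord0 ltn0 mul0r.
rewrite big_ord_recr /= IH ltnS.
case: (ltngtP l n) => h /=.
- by rewrite mul0r addr0.
- by rewrite !mul0r addr0.
- by rewrite h mul0r add0r.
Qed.

Lemma sum_ge_split m k (h : nat -> R) : (k <= m)%N ->
  (forall l, (l < k)%N -> h l = 0) ->
  \sum_(l < m) h l = \sum_(k <= l < m) h l.
Proof.
move=> km hk; rewrite -(big_mkord xpredT) (@big_cat_nat _ _ _ k 0 m _ _ (leq0n k) km) /=.
by rewrite big_nat big1 ?add0r // => l /andP [_ hl]; apply: hk.
Qed.

Lemma sum_widen m m' (h : nat -> R) : (m' <= m)%N -> (forall l, 0 <= h l) ->
  \sum_(l < m') h l <= \sum_(l < m) h l.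
Proof.
move=> mm hh; rewrite -!(big_mkord xpredT) (@big_cat_nat _ _ _ m' 0 m _ _ (leq0n m') mm) /= lerDl.
by apply: sumr_ge0 => l _.
Qed.

Lemma nsq_last m k (v : 'cV[R]_m) : (k <= m)%N ->
  nsq ((\matrix_(a < m, j < m - k) ((a : nat) == k + j)%N%:R)^T *m v) =
  \sum_(k <= l < m) vat v l ^+ 2.
Proof.
move=> km; rewrite /nsq.
have -> : \sum_(k <= l < m) vat v l ^+ 2 = \sum_(0 + k <= l < m) vat v l ^+ 2 by [].
rewrite big_addn big_mkord; apply: eq_bigr => j _.
rewrite mxE /vat addnC; congr (_ ^+ 2); apply: eq_bigr => a _; rewrite !mxE.
by [].
Qed.

Lemma block (m m' k r : nat) (G : 'M[R]_(m', m)) (gam : nat -> R)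
    (B : 'M[R]_(m, r)) (Bd : 'M[R]_(r, k)) (c : R) (i : 'I_k) :
  (k <= m')%N -> (m' <= m)%N ->
  (forall (l : 'I_m') (a : 'I_m), G l a = ((l : nat) == a)%:R * gam l) ->
  (forall l : nat, (k <= l)%N -> (l < m')%N -> gam l ^+ 2 <= gam k ^+ 2) ->
  (forall l : nat, (l <= i)%N -> gam i <= gam l) -> 0 < gam i ->
  (pid_mx k : 'M[R]_(m, k))^T *m B *m Bd = 1%:M ->
  (forall z, nsq ((\matrix_(a < m, j < m - k) ((a : nat) == k + j)%N%:R)^T
                    *m B *m Bd *m z) <= c ^+ 2 * nsq z) ->
  forall x : 'cV[R]_k, (forall l : 'I_k, (i < l)%N -> x l 0 = 0) ->
  exists z : 'cV[R]_k, exists g : 'cV[R]_m',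
    [/\ G *m (B *m (Bd *m z)) = (pid_mx k : 'M[R]_(m', k)) *m x + g,
        (pid_mx k : 'M[R]_(m', k))^T *m g = 0 &
        nsq g <= (gam k / gam i) ^+ 2 * c ^+ 2 * nsq x].
Proof.
move=> km' mm hG hgk hgi gi0 hB hc x hx.
have km : (k <= m)%N by apply: leq_trans km' mm.
set z : 'cV[R]_k := \col_l (x l 0 / gam l).
set v := B *m (Bd *m z).
have hvz : forall l : 'I_k, vat v l = z l 0.
  move=> l; rewrite -pidT_entry /v !mulmxA hB mul1mx //.
have hGv : forall l : 'I_m', (G *m v) l 0 = gam l * vat v l.
  move=> l; rewrite mxE /vat mulr_sumr; apply: eq_bigr => a _.
  by rewrite hG eq_sym; ring.
set g := G *m v - (pid_mx k : 'M[R]_(m', k)) *m x.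
have hg : forall l : 'I_m', g l 0 = if (l < k)%N then 0 else gam l * vat v l.
  move=> l; rewrite /g mxE.
  have -> : (- ((pid_mx k : 'M[R]_(m', k)) *m x)) l 0 = - (((pid_mx k : 'M[R]_(m', k)) *m x) l 0) by rewrite mxE.
  rewrite hGv pid_entry.
  case: ltnP => hl; last by rewrite (vat_ge x) // oppr0 addr0.
  have -> : vat v l = vat v (Ordinal hl) by [].
  have -> : vat x l = x (Ordinal hl) 0 by rewrite -vat_ord.
  rewrite hvz mxE.
  have [lei|gti] := leqP (Ordinal hl) i.
    have gl : 0 < gam l by apply: lt_le_trans gi0 (hgi _ lei).
    by rewrite mulrCA divff ?mulr1 ?subrr // gt_eqF.
  by rewrite hx // mul0r mulr0 subrr.
exists z, g; split.
- by rewrite /g addrC subrK.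
- apply/matrixP => b j; rewrite ord1 pidT_entry mxE.
  have hb : (b < m')%N by apply: leq_trans (ltn_ord b) km'.
  by rewrite (_ : (b : nat) = Ordinal hb) // vat_ord hg /= ltn_ord.
have step1 : nsq g <= gam k ^+ 2 * \sum_(k <= l < m) vat v l ^+ 2.
  have e : \sum_(k <= l < m) vat v l ^+ 2 = \sum_(l < m) (vat v l ^+ 2 * (k <= l)%:R).
    have hk0 : forall l, (l < k)%N -> vat v l ^+ 2 * (k <= l)%:R = 0.
      move=> l hl; have -> : (k <= l)%N = false by apply/negbTE; lia.
      by rewrite mulr0.
    symmetry; etransitivity; first exact: (@sum_ge_split m k (fun l => vat v l ^+ 2 * (k <= l)%:R) km hk0).
    by apply: eq_big_nat => l /andP [hl _]; rewrite hl mulr1.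
  rewrite e.
  rewrite mulr_sumr.
  apply: le_trans (_ : \sum_(l < m') gam k ^+ 2 * (vat v l ^+ 2 * (k <= l)%:R) <= _).
    rewrite /nsq; apply: ler_sum => l _; rewrite hg.
    case: ltnP => hl; first by rewrite expr0n /= mulr0 mulr0 le_refl.
    rewrite mulr1 exprMn; apply: ler_wpM2r; first exact: sqr_ge0.
    by apply: hgk.
  apply: (@sum_widen m m' (fun l => gam k ^+ 2 * (vat v l ^+ 2 * (k <= l)%:R))) => // l.
  by apply: mulr_ge0; [apply: sqr_ge0 | apply: mulr_ge0; [apply: sqr_ge0|case: (k <= l)%N]].
have step2 : \sum_(k <= l < m) vat v l ^+ 2 <= c ^+ 2 * nsq z.
  by rewrite -nsq_last // /v; have := hc z; rewrite -!mulmxA.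
have step3 : nsq z <= nsq x / gam i ^+ 2.
  rewrite /nsq mulr_suml; apply: ler_sum => l _; rewrite mxE.
  have [lei|gti] := leqP l i; last by rewrite hx // !mul0r expr0n /= mul0r.
  have gl : 0 < gam l by apply: lt_le_trans gi0 (hgi _ lei).
  rewrite expr_div_n ler_wpM2l ?sqr_ge0 // lef_pV2 ?posrE ?exprn_gt0 //.
  have := hgi _ lei; have := ltW gi0; nra.
have c2 : 0 <= c ^+ 2 by apply: sqr_ge0.
apply: le_trans step1 _.
apply: le_trans (ler_wpM2l (sqr_ge0 _) step2) _.
apply: le_trans (ler_wpM2l (sqr_ge0 _) (ler_wpM2l c2 step3)) _.
rewrite expr_div_n (_ : forall a b d e : R, a * (b * (d / e)) = a / e * b * d) //.
by move=> a b d e; ring.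
Qed.

Lemma pow_le (a b : R) e : 0 <= a -> a <= b -> a ^+ e <= b ^+ e.
Proof.
move=> ha hab; apply: lerXn2r; rewrite ?nnegrE //; exact: le_trans hab.
Qed.

Lemma diag_expr n (d : 'rV[R]_n) q : (diag_mx d) ^+ q = diag_mx (\row_j d 0 j ^+ q).
Proof.
elim: q => [|q IH].
  rewrite expr0 -idmxE; apply/matrixP => a b; rewrite !mxE expr0.
  by case: (a == b); rewrite ?mulr1n ?mulr0n.
rewrite exprS IH -mulmxE mulmx_diag; congr diag_mx; apply/matrixP => a b.
by rewrite !mxE exprS.
Qed.

Lemma conj_expr n (V D : 'M[R]_n) q : V^T *m V = 1%:M ->
  (V *m D *m V^T) ^+ q = V *m D ^+ q *m V^T.
Proof.
move=> hV; have hVV : V *m V^T = 1%:M by apply: mulmx1C.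
elim: q => [|q IH]; first by rewrite !expr0 -idmxE mulmx1 hVV.
rewrite exprSr IH exprSr -!mulmxE !mulmxA -(mulmxA _ V^T V) hV mulmx1 //.
Qed.

Lemma sq_e4 (delta c : R) q :
  (delta ^+ (2 * q + 2) * c) ^+ 2 = delta ^+ (4 * q + 4) * c ^+ 2.
Proof. rewrite exprMn -exprM; congr (_ * _); congr (_ ^+ _); lia. Qed.

Lemma sq_e2 (delta c : R) q :
  (delta ^+ (2 * q + 1) * c) ^+ 2 = delta ^+ (4 * q + 2) * c ^+ 2.
Proof. rewrite exprMn -exprM; congr (_ * _); congr (_ ^+ _); lia. Qed.

End Aux.

Theorem corollary2 (R : realType) (m n k p q : nat)
    (A : 'M[R]_(m, n)) (U : 'M[R]_m) (V : 'M[R]_n) (sigma : nat -> R)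
    (Phi : 'M[R]_(m, k + p)) (Pbar : 'M[R]_(n, k + p))
    (Q : 'M[R]_(m, k + p)) (Rm : 'M[R]_(k + p))
    (Ptil : 'M[R]_(k + p)) (Rtil : 'M[R]_(k + p))
    (Phi1dag : 'M[R]_(k + p, k))
    (theta phi : 'I_k -> R) :
  (* dimensions *)
  (n <= m)%N -> (1 <= k)%N -> (1 <= p)%N -> (k + p < n)%N ->
  (* full SVD of A, singular values sigma 0 >= sigma 1 >= ... >= sigma (n-1) >= 0 *)
  U^T *m U = 1%:M -> V^T *m V = 1%:M ->
  (forall i j, (i <= j)%N -> (j < n)%N -> sigma j <= sigma i) ->
  (forall j, (j < n)%N -> 0 <= sigma j) ->
  A = U *m (\matrix_(i < m, j < n) (((i : nat) == j)%:R * sigma j)) *m V^T ->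
  0 < sigma k.-1 ->
  (* RU-QLP *)
  orthonormal_cols Pbar ->
  let M := (A^T *m A) ^+ q *m A^T *m Phi in
  \rank M = (k + p)%N ->
  (Pbar^T == M^T)%MS ->
  orthonormal_cols Q -> upper_trig Rm -> A *m Pbar = Q *m Rm ->
  orthonormal_cols Ptil -> upper_trig Rtil -> Rm^T = Ptil *m Rtil ->
  let P := Pbar *m Ptil in
  (* Phi-hat blocks *)
  let Uk := first_cols k U in
  let Vk := first_cols k V in
  let Phi1 := Uk^T *m Phi in
  let Phi2 := (last_cols k U)^T *m Phi in
  \rank Phi1 = k ->
  is_mp_pinv Phi1 Phi1dag ->
  principal_angles Q Uk theta ->
  principal_angles P Vk phi ->
  let c := spec_norm (Phi2 *m Phi1dag) in
  forall i : 'I_k,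
    let delta := sigma k / sigma i in
    [/\ cos (theta i) >= 1 / Num.sqrt (1 + delta ^+ (4 * q + 4) * c ^+ 2),
        tan (theta i) <= delta ^+ (2 * q + 2) * c,
        cos (phi i) >= 1 / Num.sqrt (1 + delta ^+ (4 * q + 2) * c ^+ 2)
      & tan (phi i) <= delta ^+ (2 * q + 1) * c].
Proof.
move=> nm k1 p1 kpn hU hV smono s0 hA sk0 hPbar M rM hPM hQ _ hAPQ hPtil _ hRt.
move=> P Uk Vk Phi1 Phi2 rPhi1 hmp hth hph c i delta.
have hUU : U *m U^T = 1%:M by apply: mulmx1C.
have hVV : V *m V^T = 1%:M by apply: mulmx1C.
have kn : (k < n)%N by lia.
have km : (k <= m)%N by lia.
set Sg := \matrix_(i0 < m, j < n) (((i0 : nat) == j)%:R * sigma j) in hA.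
set D := Sg^T *m Sg.
have hD : D = diag_mx (\row_j sigma j ^+ 2).
  apply/matrixP => a b; rewrite !mxE.
  transitivity (\sum_(l < m) (((a : nat) == l)%:R * (sigma a * ((l == b :> nat)%:R * sigma b)))).
    by apply: eq_bigr => l _; rewrite !mxE eq_sym; ring.
  rewrite (sum_eqn m a (fun l => sigma a * ((l == b :> nat)%:R * sigma b))).
  have -> : (a < m)%N by apply: leq_trans (ltn_ord a) nm.
  rewrite val_eqE; case: eqVneq => [->|_]; last by rewrite !mul0r !mulr0 mulr0n.
  by rewrite mulr1n !mul1r expr2.
have hAtA : A^T *m A = V *m D *m V^T.
  rewrite hA !trmx_mul trmxK !mulmxA -(mulmxA _ U^T U) hU mulmx1 //.
have hpow : (A^T *m A) ^+ q = V *m diag_mx (\row_j sigma j ^+ (2 * q)) *m V^T.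
  rewrite hAtA conj_expr // hD diag_expr; congr (_ *m diag_mx _ *m _).
  by apply/matrixP => a b; rewrite !mxE -exprM.
set Gp := diag_mx (\row_j sigma j ^+ (2 * q)) *m Sg^T.
have hGp : forall (l : 'I_n) (a : 'I_m), Gp l a = ((l : nat) == a)%:R * sigma l ^+ (2 * q + 1).
  by move=> l a; rewrite /Gp mul_diag_mx !mxE eq_sym exprD expr1; ring.
have hVM : V^T *m M = Gp *m (U^T *m Phi).
  rewrite /M hpow hA !trmx_mul trmxK !mulmxA hV mul1mx -(mulmxA _ V^T V) hV mulmx1.
  by [].
set Gt := Sg *m Gp.
pose gt := fun l : nat => (l < n)%:R * sigma l ^+ (2 * q + 2).
have hGt : forall (l a : 'I_m), Gt l a = ((l : nat) == a)%:R * gt l.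
  move=> l a; rewrite mxE.
  transitivity (\sum_(j < n) (((l : nat) == j)%:R *
      (sigma j * ((j == a :> nat)%:R * sigma j ^+ (2 * q + 1))))).
    by apply: eq_bigr => j _; rewrite hGp mxE; ring.
  rewrite (sum_eqn n l (fun j => sigma j * ((j == a :> nat)%:R * sigma j ^+ (2 * q + 1)))) /gt.
  by rewrite (_ : (2 * q + 2 = (2 * q + 1).+1)%N) ?exprS; [ring | lia].
have hUw : forall y : 'cV[R]_(k + p), U^T *m (A *m (M *m y)) = Gt *m (U^T *m Phi) *m y.
  move=> y; have e : U^T *m (U *m Sg *m V^T) = Sg *m V^T by rewrite !mulmxA hU mul1mx.
  rewrite hA mulmxA e -mulmxA (mulmxA V^T M y) hVM /Gt !mulmxA //.
pose E : 'M[R]_(m, m - k) := \matrix_(a < m, j < m - k) ((a : nat) == k + j)%N%:R.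
have ePhi1 : Phi1 = (pid_mx k : 'M[R]_(m, k))^T *m (U^T *m Phi).
  by rewrite /Phi1 /Uk /first_cols trmx_mul mulmxA.
have ePhi2 : Phi2 = E^T *m (U^T *m Phi).
  by rewrite /Phi2 /last_cols trmx_mul mulmxA.
have hPhi1 : Phi1 *m Phi1dag = 1%:M.
  have rf : row_free Phi1 by rewrite /row_free rPhi1.
  case: hmp => h1 _ _ _; apply: (row_free_inj rf); rewrite /= mul1mx; exact: h1.
have hB : (pid_mx k : 'M[R]_(m, k))^T *m (U^T *m Phi) *m Phi1dag = 1%:M by rewrite -ePhi1.
have [c0 hc] := spec_bound (Phi2 *m Phi1dag).
have hc' : forall z, nsq (E^T *m (U^T *m Phi) *m Phi1dag *m z) <= c ^+ 2 * nsq z.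
  by move=> z; rewrite -ePhi2; exact: hc.
have [T eT] : exists T, M = Pbar *m T.
  move/andP: hPM => [_ /submxP [D1 e]]; exists D1^T.
  by rewrite -[M]trmxK e trmx_mul trmxK.
have sig_i : forall l : nat, (l < k)%N -> sigma k.-1 <= sigma l.
  by move=> l hl; apply: smono; lia.
have sikpos : 0 < sigma i by apply: lt_le_trans sk0 (sig_i _ (ltn_ord i)).
have sik : sigma k <= sigma i by apply: smono; have := ltn_ord i; lia.
have gtk : gt k = sigma k ^+ (2 * q + 2) by rewrite /gt kn mul1r.
have gti : gt i = sigma i ^+ (2 * q + 2) by rewrite /gt (_ : (i < n)%N) ?mul1r //; have := ltn_ord i; lia.
have tth : gt k / gt i * c = delta ^+ (2 * q + 2) * c by rewrite gtk gti /delta expr_div_n.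
have hθ : sin (theta i) ^+ 2 * (1 + (gt k / gt i * c) ^+ 2) <= (gt k / gt i * c) ^+ 2.
  case: hth => _ [_ hs]; rewrite /Uk /first_cols in hs.
  have t0 : 0 <= gt k / gt i * c.
    rewrite tth; apply: mulr_ge0 => //; apply: exprn_ge0; rewrite /delta.
    by apply: divr_ge0 => //; [apply: s0 | apply: ltW].
  have := @gen_bound R m (k + p) k U Q (fun j => sin (theta (rev_ord j))) i _ km hU hQ hs t0.
  rewrite rev_ordK; apply => x hx.
  have [|||z [g [e1 e2 e3]]] := @block R m m k (k + p) Gt gt (U^T *m Phi) Phi1dag c i km
      (leqnn m) hGt _ _ _ hB hc' x hx.
  - move=> l hl1 hl2; rewrite gtk /gt; case: ltnP => hl; last first.
      by rewrite mul0r expr0n /=; apply: sqr_ge0.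
    rewrite mul1r; apply: pow_le; first by apply: exprn_ge0; apply: s0.
    apply: pow_le; first by apply: s0.
    by apply: smono.
  - move=> l hl; rewrite gti /gt (_ : (l < n)%N) ?mul1r; last by have := ltn_ord i; lia.
    apply: pow_le; first by apply: ltW.
    by apply: smono; have := ltn_ord i; lia.
  - by rewrite gti exprn_gt0.
  exists g, (A *m (M *m (Phi1dag *m z))); split.
  - rewrite eT -(mulmxA Pbar) mulmxA hAPQ -mulmxA; exact: proj_kill.
  - by rewrite hUw -e1 !mulmxA.
  - exact: e2.
  - by rewrite exprMn.
pose gp := fun l : nat => sigma l ^+ (2 * q + 1).
have hPP : P^T *m P = 1%:M.
  by rewrite /P trmx_mul -mulmxA (mulmxA Pbar^T) hPbar mul1mx hPtil.
have ePbar : Pbar = P *m Ptil^T.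
  have hPP' : Ptil *m Ptil^T = 1%:M by apply: mulmx1C.
  by rewrite /P -mulmxA hPP' mulmx1.
clearbody P.
have tph : gp k / gp i * c = delta ^+ (2 * q + 1) * c by rewrite /gp /delta expr_div_n.
have hφ : sin (phi i) ^+ 2 * (1 + (gp k / gp i * c) ^+ 2) <= (gp k / gp i * c) ^+ 2.
  case: hph => _ [_ hs]; rewrite /Vk /first_cols in hs.
  have t0 : 0 <= gp k / gp i * c.
    rewrite tph; apply: mulr_ge0 => //; apply: exprn_ge0; rewrite /delta.
    by apply: divr_ge0 => //; [apply: s0 | apply: ltW].
  have := @gen_bound R n (k + p) k V P (fun j => sin (phi (rev_ord j))) i _ (ltnW kn) hV hPP hs t0.
  rewrite rev_ordK; apply => x hx.
  have [|||z [g [e1 e2 e3]]] := @block R m n k (k + p) Gp gp (U^T *m Phi) Phi1dag c i (ltnW kn)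
      nm hGp _ _ _ hB hc' x hx.
  - move=> l hl1 hl2; rewrite /gp.
    apply: pow_le; first by apply: exprn_ge0; apply: s0.
    apply: pow_le; first by apply: s0.
    by apply: smono.
  - move=> l hl; rewrite /gp.
    apply: pow_le; first by apply: ltW.
    by apply: smono; have := ltn_ord i; lia.
  - by rewrite /gp exprn_gt0.
  exists g, (M *m (Phi1dag *m z)); split.
  - rewrite eT ePbar -!mulmxA; exact: proj_kill.
  - by rewrite mulmxA hVM -e1 !mulmxA.
  - exact: e2.
  - by rewrite exprMn.
have th0 : 0 <= theta i <= pi / 2 by case: hth => _ [hb _]; apply: hb.
have ph0 : 0 <= phi i <= pi / 2 by case: hph => _ [hb _]; apply: hb.
have d0 : 0 <= delta by rewrite /delta divr_ge0 //; [apply: s0 | apply: ltW].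
have t1 : 0 <= delta ^+ (2 * q + 2) * c by apply: mulr_ge0 => //; apply: exprn_ge0.
have t2 : 0 <= delta ^+ (2 * q + 1) * c by apply: mulr_ge0 => //; apply: exprn_ge0.
rewrite tth in hθ; rewrite tph in hφ.
have [a1 a2] := trig_final th0 t1 hθ.
have [b1 b2] := trig_final ph0 t2 hφ.
have e4 : (delta ^+ (2 * q + 2) * c) ^+ 2 = delta ^+ (4 * q + 4) * c ^+ 2.
  exact: sq_e4.
have e5 : (delta ^+ (2 * q + 1) * c) ^+ 2 = delta ^+ (4 * q + 2) * c ^+ 2.
  exact: sq_e2.
rewrite e4 in a1; rewrite e5 in b1.
by split.
Qed.
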